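(* Let $(V,g)$ be a four-dimensional Lorentzian vector space, $F\in\mathrm{Skew}(V)$, and $\sigma,\tau\in\mathbb{R}$. Let $\{\ell,k,e_2,e_3\}$ be a semi-null basis of $V$ such that $$F(k)=-2e_2,\qquad F(e_2)=-\ell+\tfrac{\sigma}{4}k,\qquad \langle F(\ell),F(\ell)\rangle=\tfrac{\sigma^2+\tau^2}{4}.$$ Then either the semi-null basis $\{\ell,k,e_2,e_3\}$ or the semi-null basis $\{\ell,k,e_2,-e_3\}$ (call it $\{\ell,k,e_2,e_3'\}$) satisfies $$F(\ell)=\tfrac{\sigma}{2}e_2+\tfrac{\tau}{2}e_3',\quad F(k)=-2e_2,\quad F(e_2)=-\ell+\tfrac{\sigma}{4}k,\quad F(e_3')=\tfrac{\tau}{4}k,$$ and both do whenever $\tau=0$.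
   Context: $\mathrm{Skew}(V)$ denotes the endomorphisms $F$ with $\langle e,F(e')\rangle=-\langle F(e),e'\rangle$ for all $e,e'$. A semi-null basis $\{\ell,k,e_2,e_3\}$ is a basis with $\ell,k$ null, $\langle \ell,k\rangle=-2$, $e_2,e_3$ unit spacelike, and all other inner products between distinct basis elements equal to zero. *)

(* Defs.v *)
From HB Require Import structures.
From mathcomp Require Import all_boot all_order all_algebra.
Set Implicit Arguments. Unset Strict Implicit. Unset Printing Implicit Defensive.
Import Order.TTheory GRing.Theory Num.Theory.
Local Open Scope ring_scope.

Section LorentzDefs.
Variables (R : realFieldType) (V : vectType R).

Definition sym_bilinear (g : V -> V -> R) : Prop :=
  (forall u v, g u v = g v u) /\
  (forall (a : R) u v w, g (a *: u + v) w = a * g u w + g v w).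

Definition lorentzian4 (g : V -> V -> R) : Prop :=
  sym_bilinear g /\
  exists b : 'I_4 -> V,
    basis_of fullv [seq b i | i <- enum 'I_4] /\
    forall i j : 'I_4, g (b i) (b j) =
      (if i == j then (if i == ord0 then -1 else 1) else 0).

Definition g_skew (g : V -> V -> R) (F : V -> V) : Prop :=
  linear F /\ forall e e', g e (F e') = - g (F e) e'.

Definition semi_null_basis (g : V -> V -> R) (l k e2 e3 : V) : Prop :=
  basis_of fullv [:: l; k; e2; e3] /\
  g l l = 0 /\ g k k = 0 /\ g l k = -2 /\
  g e2 e2 = 1 /\ g e3 e3 = 1 /\
  g l e2 = 0 /\ g l e3 = 0 /\ g k e2 = 0 /\ g k e3 = 0 /\ g e2 e3 = 0.

Definition normal_form (F : V -> V) (sigma tau : R) (l k e2 e3 : V) : Prop :=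
  F l = (sigma / 2) *: e2 + (tau / 2) *: e3 /\
  F k = (-2) *: e2 /\
  F e2 = - l + (sigma / 4) *: k /\
  F e3 = (tau / 4) *: k.

End LorentzDefs.

(* Main.v *)
Require Import Defs.
From HB Require Import structures.
From mathcomp Require Import all_boot all_order all_algebra.
From mathcomp Require Import reals.
From mathcomp Require Import ring lra.
Import Order.TTheory GRing.Theory Num.Theory.
Local Open Scope ring_scope.

Section Aux.
Variables (R : realFieldType) (V : vectType R) (g : V -> V -> R).
Hypothesis Hg : sym_bilinear g.

Lemma gDl u v w : g (u + v) w = g u w + g v w.
Proof. by case: Hg => _ H; rewrite -[u in LHS]scale1r H mul1r. Qed.
Lemma g0l w : g 0 w = 0.
Proof. have := gDl 0 0 w; rewrite addr0 => H; by apply: (addrI (g 0 w)); rewrite addr0 -H. Qed.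
Lemma gZl a u w : g (a *: u) w = a * g u w.
Proof. by case: Hg => _ H; rewrite -[_ *: u]addr0 H g0l addr0. Qed.
Lemma gNl u w : g (- u) w = - g u w.
Proof. by rewrite -scaleN1r gZl mulN1r. Qed.
Lemma gDr u v w : g w (u + v) = g w u + g w v.
Proof. by case: Hg => S _; rewrite !(S w) gDl. Qed.
Lemma gZr a u w : g w (a *: u) = a * g w u.
Proof. by case: Hg => S _; rewrite !(S w) gZl. Qed.
Lemma gNr u w : g w (- u) = - g w u.
Proof. by case: Hg => S _; rewrite !(S w) gNl. Qed.

Lemma decomp (l k e2 e3 : V) : semi_null_basis g l k e2 e3 ->
  forall v, v = (- g k v / 2) *: l + (- g l v / 2) *: k + g e2 v *: e2 + g e3 v *: e3.
Proof.
case: Hg => S _.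
move=> [Hb [ll [kk [lk [e22 [e33 [le2 [le3 [ke2 [ke3 e23]]]]]]]]]] v.
have : v \in <<[:: l; k; e2; e3]>>%VS by rewrite (eqP (andP Hb).1) memvf.
rewrite !span_cons span_nil addv0.
move=> /memv_addP [y /vlineP [a ->] [z /memv_addP [y' /vlineP [b ->]
  [z' /memv_addP [y'' /vlineP [c ->] [z'' /vlineP [d ->] ->]]] ->]] ->].
rewrite !gDr !gZr (S k l) (S e2 l) (S e3 l) (S e2 k) (S e3 k) (S e3 e2)
  ll kk lk e22 e33 le2 le3 ke2 ke3 e23.
rewrite !addrA; congr (_ *: _ + _ *: _ + _ *: _ + _ *: _); by field.
Qed.
End Aux.
Arguments gDl {R V g}. Arguments gZl {R V g}. Arguments gNl {R V g}.
Arguments gDr {R V g}. Arguments gZr {R V g}. Arguments gNr {R V g}. Arguments g0l {R V g}. Arguments decomp {R V g}.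

Theorem lemma3p1 (R : realType) (V : vectType R) (g : V -> V -> R)
  (F : V -> V) (sigma tau : R) (l k e2 e3 : V) :
  lorentzian4 g ->
  g_skew g F ->
  semi_null_basis g l k e2 e3 ->
  F k = (-2) *: e2 ->
  F e2 = - l + (sigma / 4) *: k ->
  g (F l) (F l) = (sigma ^+ 2 + tau ^+ 2) / 4 ->
  (normal_form F sigma tau l k e2 e3 \/ normal_form F sigma tau l k e2 (- e3)) /\
  (tau = 0 ->
     normal_form F sigma tau l k e2 e3 /\ normal_form F sigma tau l k e2 (- e3)).
Proof.
move=> [Hg _] [Flin Fsk] Hsn Fk Fe2 FlFl.
have HB := Hsn.
move: Hsn => [Hb [ll [kk [lk [e22 [e33 [le2 [le3 [ke2 [ke3 e23]]]]]]]]]].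
have S := Hg.1.
have gDl := gDl Hg; have gZl := gZl Hg; have gNl := gNl Hg.
have gDr := gDr Hg; have gZr := gZr Hg; have gNr := gNr Hg.
set d := g e3 (F l).
have h1 : g k (F l) = 0 by rewrite Fsk Fk gZl (S e2 l) le2 mulr0 oppr0.
have h2 : g l (F l) = 0.
  by have := Fsk l l; rewrite (S (F l) l) => H; lra.
have h3 : g e2 (F l) = sigma / 2.
  rewrite Fsk Fe2 gDl gNl gZl ll (S k l) lk; lra.
have EFl : F l = (sigma / 2) *: e2 + d *: e3.
  rewrite {1}(decomp Hg _ _ _ _ HB (F l)) h1 h2 h3 -/d.
  by rewrite oppr0 mul0r !scale0r !add0r.
have f1 : g l (F e3) = - d by rewrite Fsk (S (F l)).
have f2 : g k (F e3) = 0 by rewrite Fsk Fk gZl e23 mulr0 oppr0.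
have f3 : g e2 (F e3) = 0.
  by rewrite Fsk Fe2 gDl gNl gZl le3 ke3 mulr0 oppr0 add0r oppr0.
have f4 : g e3 (F e3) = 0.
  by have := Fsk e3 e3; rewrite (S (F e3) e3) => H; lra.
have EFe3 : F e3 = (d / 2) *: k.
  rewrite {1}(decomp Hg _ _ _ _ HB (F e3)) f1 f2 f3 f4.
  by rewrite oppr0 mul0r opprK !scale0r add0r !addr0.
have Hd : d ^+ 2 = (tau / 2) ^+ 2.
  move: FlFl; rewrite EFl !gDl !gZl !gDr !gZr e22 e33 e23 (S e3 e2) e23.
  move=> H; lra.
have FN : forall v, F (- v) = - F v.
  by move=> v; rewrite -!scaleN1r (scalable_linear Flin).
have NF1 : d = tau / 2 -> normal_form F sigma tau l k e2 e3.
  move=> Ed; split; [by rewrite EFl Ed| split=> //; split=> //].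
  by rewrite EFe3 Ed; congr (_ *: _); lra.
have NF2 : d = - (tau / 2) -> normal_form F sigma tau l k e2 (- e3).
  move=> Ed; split; first by rewrite EFl Ed scalerN scaleNr.
  split=> //; split=> //.
  by rewrite FN EFe3 Ed -scaleNr; congr (_ *: _); lra.
split.
  move/eqP: Hd; rewrite eqf_sqr => /orP [/eqP E|/eqP E].
    by left; apply: NF1.
  by right; apply: NF2.
move=> t0; have d0 : d = 0 by move: Hd; rewrite t0 mul0r expr0n /= => /eqP; rewrite sqrf_eq0 => /eqP.
by split; [apply: NF1 | apply: NF2]; rewrite d0 t0 mul0r ?oppr0.
Qed.
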